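(* Let $G$ be an infinite locally finite graph, $F$ a subgraph of $G$, and $D$ a finite connected graph. If $F$ is faithful to $G$, then $F\square D$ is faithful to $G\square D$ (where $F\square D$ is regarded as a subgraph of $G\square D$ in the natural way).
   Context: $\square$ denotes the Cartesian product of graphs. A ray is a one-way infinite path; two rays of a graph $H$ are equivalent in $H$ if for every finite $S\subseteq V(H)$ some component of $H-S$ contains tails of both; the classes are the ends of $H$. A subgraph $A$ of $B$ is faithful to $B$ if (i) every end of $B$ contains a ray of $A$, and (ii) any two rays of $A$ are equivalent in $A$ if and only if they are equivalent in $B$. *)

(* Defs.v *)
From Stdlib Require Import List Relations.
Set Implicit Arguments.

Record graph (V : Type) := Graph { vert : V -> Prop; adj : V -> V -> Prop }.

Definition wf_graph V (H : graph V) : Prop :=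
  (forall x y, adj H x y -> vert H x /\ vert H y) /\
  (forall x y, adj H x y -> adj H y x) /\
  (forall x, ~ adj H x x).

Definition subgraph V (A B : graph V) : Prop :=
  (forall x, vert A x -> vert B x) /\ (forall x y, adj A x y -> adj B x y).

Definition finite_graph V (H : graph V) : Prop :=
  exists l : list V, forall x, vert H x -> In x l.

Definition infinite_graph V (H : graph V) : Prop := ~ finite_graph H.

Definition locally_finite V (H : graph V) : Prop :=
  forall v, vert H v -> exists l : list V, forall w, adj H v w -> In w l.

(* connected in H - S : reflexive-transitive closure of adjacency among
   vertices of H outside S, starting from a vertex of H outside S *)
Definition avoid_adj V (H : graph V) (S : list V) : relation V :=
  fun a b => adj H a b /\ ~ In a S /\ ~ In b S.

Definition conn_avoid V (H : graph V) (S : list V) (x y : V) : Prop :=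
  vert H x /\ ~ In x S /\ clos_refl_trans V (avoid_adj H S) x y.

Definition connected_graph V (H : graph V) : Prop :=
  forall x y, vert H x -> vert H y -> conn_avoid H nil x y.

Definition is_ray V (H : graph V) (r : nat -> V) : Prop :=
  (forall m n, r m = r n -> m = n) /\
  (forall n, vert H (r n)) /\
  (forall n, adj H (r n) (r (S n))).

(* r1, r2 equivalent in H: for every finite S ⊆ V(H), some component of H - S
   contains tails of both rays (the component being the class of some c). *)
Definition ray_equiv V (H : graph V) (r1 r2 : nat -> V) : Prop :=
  forall S : list V, (forall x, In x S -> vert H x) ->
    exists c k1 k2,
      (forall n, k1 <= n -> conn_avoid H S c (r1 n)) /\
      (forall n, k2 <= n -> conn_avoid H S c (r2 n)).

(* A faithful to B: (i) every end of B contains a ray of A;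
   (ii) rays of A are equivalent in A iff equivalent in B. *)
Definition faithful V (A B : graph V) : Prop :=
  (forall r, is_ray B r -> exists r', is_ray A r' /\ ray_equiv B r r') /\
  (forall r1 r2, is_ray A r1 -> is_ray A r2 ->
     (ray_equiv A r1 r2 <-> ray_equiv B r1 r2)).

Definition cart V W (H : graph V) (D : graph W) : graph (V * W) :=
  {| vert := fun p => vert H (fst p) /\ vert D (snd p);
     adj := fun p q =>
       (adj H (fst p) (fst q) /\ snd p = snd q /\ vert D (snd p)) \/
       (fst p = fst q /\ vert H (fst p) /\ adj D (snd p) (snd q)) |}.

(* Main.v *)
Require Import Defs.
From Stdlib Require Import List Relations Lia Arith Classical ClassicalEpsilon.
Import ListNotations.
Set Implicit Arguments.

Definition tail_in V (H : graph V) (S : list V) (c : V) (s : nat -> V) : Prop :=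
  exists k, forall n, k <= n -> conn_avoid H S c (s n).

Lemma ray_equiv_alt V (H : graph V) a b :
  ray_equiv H a b <-> forall S, (forall x, In x S -> vert H x) ->
     exists c, tail_in H S c a /\ tail_in H S c b.
Proof.
  unfold ray_equiv, tail_in; split; intros Hr S HS.
  - destruct (Hr S HS) as [c [k1 [k2 [H1 H2]]]]. exists c. split.
    + exists k1. exact H1.
    + exists k2. exact H2.
  - destruct (Hr S HS) as [c [[k1 H1] [k2 H2]]]. exists c, k1, k2. split; assumption.
Qed.

Definition tail_eq V (H : graph V) (a b : nat -> V) :=
  forall S c, tail_in H S c a <-> tail_in H S c b.

Lemma ray_equiv_tail V (H : graph V) a a' b b' :
  tail_eq H a a' -> tail_eq H b b' -> (ray_equiv H a b <-> ray_equiv H a' b').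
Proof.
  intros Ha Hb. rewrite !ray_equiv_alt. split; intros Hr S HS;
  destruct (Hr S HS) as [c [H1 H2]]; exists c; split;
  first [apply Ha | apply Hb]; auto.
Qed.

Lemma rt_notin V (H : graph V) S x y :
  clos_refl_trans V (avoid_adj H S) x y -> ~ In x S -> ~ In y S.
Proof.
  induction 1; auto. intros _. destruct H0 as [_ [_ ?]]; auto.
Qed.

Lemma tail_sub V (H : graph V) (w p : nat -> V) (t : nat -> nat) :
  (forall n, adj H (w n) (w (S n)) \/ w n = w (S n)) ->
  (forall S : list V, exists N, forall n, N <= n -> ~ In (w n) S) ->
  (forall k, k <= t k /\ p k = w (t k)) ->
  tail_eq H w p.
Proof.
  intros Hw Hav Ht S c; split.
  - intros [k Hk]. exists k. intros n Hn. destruct (Ht n) as [H1 H2]. rewrite H2.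
    apply Hk. lia.
  - intros [K HK]. destruct (Hav S) as [N HN].
    set (k := max K N). destruct (Ht k) as [H1 H2].
    exists (t k). intros n Hn. induction Hn.
    + rewrite <- H2. apply HK. lia.
    + destruct IHHn as [Hc1 [Hc2 Hc3]]. split; [|split]; auto.
      destruct (Hw m) as [Ha | Ha].
      * eapply rt_trans; [exact Hc3|]. apply rt_step. split; [auto|].
        split; apply HN; lia.
      * rewrite <- Ha. auto.
Qed.

Lemma list_max_in (L : list nat) i : In i L -> i <= list_max L.
Proof.
  intros Hi. assert (Forall (fun k => k <= list_max L) L) as HF
    by (apply list_max_le; lia).
  rewrite Forall_forall in HF. auto.
Qed.

Lemma nodup_map_inj A B (f : A -> B) (L : list A) :
  (forall x y, f x = f y -> x = y) -> NoDup L -> NoDup (map f L).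
Proof.
  intros Hf; induction 1; simpl; constructor; auto.
  intros Hin. apply in_map_iff in Hin. destruct Hin as [y [Hy Hy']].
  apply Hf in Hy. subst. auto.
Qed.

Lemma avoid_one V W (X : graph V) (D : graph W) (r : nat -> V * W) :
  finite_graph D -> is_ray (cart X D) r ->
  forall v, exists N, forall n, N <= n -> fst (r n) <> v.
Proof.
  intros [lD HD] [Hinj [Hvert _]] v.
  apply NNPP; intros Hno.
  assert (Hinf : forall N, exists n, N <= n /\ fst (r n) = v).
  { intros N. apply NNPP; intros Hn. apply Hno. exists N. intros n Hn' Heq.
    apply Hn. eauto. }
  assert (Hm : forall m, exists L : list nat, NoDup L /\ length L = m /\
                  forall i, In i L -> fst (r i) = v).
  { induction m as [|m [L [H1 [H2 H3]]]].
    - exists []. repeat split; auto. constructor. intros i [].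
    - destruct (Hinf (S (list_max L))) as [n [Hn1 Hn2]].
      exists (n :: L). split; [|split].
      + constructor; auto. intros Hin. apply list_max_in in Hin. lia.
      + simpl; lia.
      + intros i [<-|Hi]; auto. }
  destruct (Hm (S (length lD))) as [L [H1 [H2 H3]]].
  assert (Hle : length (map r L) <= length (map (fun d => (v, d)) lD)).
  { apply NoDup_incl_length.
    - apply nodup_map_inj; auto.
    - intros x Hx. apply in_map_iff in Hx. destruct Hx as [i [<- Hi]].
      apply in_map_iff. exists (snd (r i)). split.
      + rewrite <- (H3 i Hi). destruct (r i); reflexivity.
      + apply HD. apply (Hvert i). }
  rewrite !length_map in Hle. lia.
Qed.

Lemma avoid_list V W (X : graph V) (D : graph W) (r : nat -> V * W) :
  finite_graph D -> is_ray (cart X D) r ->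
  forall S : list V, exists N, forall n, N <= n -> ~ In (fst (r n)) S.
Proof.
  intros HD Hr S. induction S as [|v S [N IH]].
  - exists 0. intros n _ [].
  - destruct (avoid_one HD Hr v) as [M HM]. exists (max N M).
    intros n Hn [Heq|Hin].
    + apply (HM n); auto; lia.
    + apply (IH n); auto; lia.
Qed.

Lemma last_ex (P : nat -> Prop) : forall d t, P t -> (forall n, t + d <= n -> ~ P n) ->
  exists t', t <= t' /\ P t' /\ forall n, t' < n -> ~ P n.
Proof.
  induction d; intros t Ht Hn.
  - exfalso. apply (Hn t); auto. lia.
  - destruct (classic (forall n, t < n -> ~ P n)) as [Hall|Hex].
    + exists t. auto.
    + apply not_all_ex_not in Hex. destruct Hex as [n Hn'].
      apply imply_to_and in Hn'. destruct Hn' as [Hlt HPn]. apply NNPP in HPn.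
      destruct (IHd n HPn) as [t' [A [B C]]].
      * intros m Hm. apply Hn. lia.
      * exists t'. split; [lia|auto].
Qed.

Fixpoint seqt (L : nat -> nat) (k : nat) : nat :=
  match k with 0 => L 0 | S k => L (S (seqt L k)) end.

Lemma loop_erase V (H : graph V) (w : nat -> V) :
  (forall n, vert H (w n)) ->
  (forall n, adj H (w n) (w (S n)) \/ w n = w (S n)) ->
  (forall v, exists N, forall n, N <= n -> w n <> v) ->
  exists p t, is_ray H p /\ forall k, k <= t k /\ p k = w (t k).
Proof.
  intros Hv Hw Hfin.
  assert (Hlast : forall t, exists t', t <= t' /\ w t' = w t /\
                     forall n, t' < n -> w n <> w t).
  { intros t. destruct (Hfin (w t)) as [N HN].
    apply (last_ex (fun n => w n = w t) N t); auto.
    intros n Hn. apply HN. lia. }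
  pose (L := fun t => proj1_sig (constructive_indefinite_description _ (Hlast t))).
  assert (HL : forall t, t <= L t /\ w (L t) = w t /\ forall n, L t < n -> w n <> w t).
  { intros t. unfold L. destruct (constructive_indefinite_description _ _). auto. }
  set (tt := seqt L).
  assert (Hinc : forall k, tt k < tt (S k)).
  { intros k. change (tt (S k)) with (L (S (tt k))). destruct (HL (S (tt k))) as [A _]. lia. }
  assert (Hmono : forall i j, i < j -> tt i < tt j).
  { intros i j Hij. induction Hij.
    - apply Hinc.
    - specialize (Hinc m). lia. }
  assert (Hge : forall k, k <= tt k).
  { induction k. lia. specialize (Hinc k). lia. }
  assert (Hlp : forall k n, tt k < n -> w n <> w (tt k)).
  { intros k n Hn.
    assert (Hx : exists x, tt k = L x) by (destruct k; [exists 0 | exists (S (tt k))]; reflexivity).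
    destruct Hx as [x Hx]. rewrite Hx in *. destruct (HL x) as [_ [B C]].
    rewrite B; apply C; auto. }
  exists (fun k => w (tt k)), tt. split.
  - split; [|split].
    + intros i j Heq. destruct (Nat.lt_trichotomy i j) as [Hij|[Hij|Hij]]; auto.
      * exfalso. apply (Hlp i (tt j)); auto.
      * exfalso. apply (Hlp j (tt i)); auto.
    + intros n; apply Hv.
    + intros k. assert (E : w (tt (S k)) = w (S (tt k))).
      { change (tt (S k)) with (L (S (tt k))). destruct (HL (S (tt k))) as [_ [B _]]. exact B. }
      rewrite E. destruct (Hw (tt k)) as [A|A]; auto.
      exfalso. apply (Hlp k (S (tt k))); auto.
  - intros k. auto.
Qed.

Lemma exists_filter A (l : list A) (P : A -> Prop) :
  exists l', forall x, In x l' <-> In x l /\ P x.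
Proof.
  induction l as [|a l [l' IH]].
  - exists []. simpl. tauto.
  - destruct (classic (P a)) as [Ha|Ha].
    + exists (a :: l'). intros x. simpl. rewrite IH. split.
      * intros [<-|[? ?]]; auto.
      * intros [[<-|?] ?]; auto.
    + exists l'. intros x. simpl. rewrite IH. split.
      * intros [? ?]; auto.
      * intros [[<-|?] ?]; [contradiction|auto].
Qed.

Lemma proj_rt V W (H : graph V) (D : graph W) S' S :
  wf_graph D ->
  (forall x, ~ In x S' -> vert D (snd x) -> ~ In (fst x) S) ->
  forall a b, clos_refl_trans _ (avoid_adj (cart H D) S') a b ->
  clos_refl_trans _ (avoid_adj H S) (fst a) (fst b).
Proof.
  intros [HwD _] HP a b Hab. induction Hab.
  - destruct H0 as [Hadj [Hx Hy]]. simpl in Hadj.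
    destruct Hadj as [[A [B C]]|[A [B C]]].
    + apply rt_step. split; [auto|split].
      * apply HP; auto.
      * apply HP; auto. rewrite <- B. auto.
    + rewrite A. apply rt_refl.
  - apply rt_refl.
  - eapply rt_trans; eauto.
Qed.

Lemma lift1 V W (H : graph V) (D : graph W) S' S d :
  (forall x, In x S' -> In (fst x) S) -> vert D d ->
  forall a b, clos_refl_trans _ (avoid_adj H S) a b ->
  clos_refl_trans _ (avoid_adj (cart H D) S') (a, d) (b, d).
Proof.
  intros HS Hd a b Hab. induction Hab.
  - destruct H0 as [A [B C]]. apply rt_step. split; [|split].
    + left. simpl. auto.
    + intros Hin. apply B. apply (HS _ Hin).
    + intros Hin. apply C. apply (HS _ Hin).
  - apply rt_refl.
  - eapply rt_trans; eauto.
Qed.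

Lemma lift2 V W (H : graph V) (D : graph W) S' S a :
  (forall x, In x S' -> In (fst x) S) -> vert H a -> ~ In a S ->
  forall d e, clos_refl_trans _ (avoid_adj D nil) d e ->
  clos_refl_trans _ (avoid_adj (cart H D) S') (a, d) (a, e).
Proof.
  intros HS Ha Han d e Hde. induction Hde.
  - destruct H0 as [A _]. apply rt_step. split; [|split].
    + right. simpl. auto.
    + intros Hin. apply Han. apply (HS _ Hin).
    + intros Hin. apply Han. apply (HS _ Hin).
  - apply rt_refl.
  - eapply rt_trans; eauto.
Qed.

Lemma key V W (H : graph V) (D : graph W) r1 r2 :
  wf_graph D -> finite_graph D -> connected_graph D ->
  is_ray (cart H D) r1 -> is_ray (cart H D) r2 ->
  (ray_equiv (cart H D) r1 r2 <->
   ray_equiv H (fun n => fst (r1 n)) (fun n => fst (r2 n))).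
Proof.
  intros HwD [lD HlD] Hcon Hr1 Hr2. split.
  - intros Hr S HS.
    destruct (exists_filter (list_prod S lD) (fun p => vert D (snd p))) as [S' HS'].
    destruct (Hr S') as [c [k1 [k2 [H1 H2]]]].
    { intros x Hx. apply HS' in Hx. destruct Hx as [Hx Hd].
      destruct x as [x d]. apply in_prod_iff in Hx. simpl in *. split; auto. apply HS; tauto. }
    assert (HP : forall x, ~ In x S' -> vert D (snd x) -> ~ In (fst x) S).
    { intros [x d] Hx Hd Hin. apply Hx. apply HS'. split; auto.
      apply in_prod_iff. auto. }
    assert (Hconv : forall y, conn_avoid (cart H D) S' c y -> conn_avoid H S (fst c) (fst y)).
    { intros y [[Hv1 Hv2] [Hn Hrt]]. split; [auto|split].
      - apply HP; auto.
      - eapply proj_rt; eauto. }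
    exists (fst c), k1, k2. split; intros n Hn; apply Hconv; auto.
  - intros Hr S' HS'.
    destruct (Hr (map fst S')) as [c [k1 [k2 [H1 H2]]]].
    { intros x Hx. apply in_map_iff in Hx. destruct Hx as [y [<- Hy]]. apply (HS' y Hy). }
    assert (HSS : forall x, In x S' -> In (fst x) (map fst S')) by (intros; apply in_map; auto).
    destruct Hr1 as [Hi1 [Hv1 Ha1]].
    set (d0 := snd (r1 0)).
    assert (Hd0 : vert D d0) by apply (Hv1 0).
    assert (Hlift : forall (r : nat -> V * W), (forall n, vert (cart H D) (r n)) ->
       forall n, conn_avoid H (map fst S') c (fst (r n)) -> conn_avoid (cart H D) S' (c, d0) (r n)).
    { intros r Hv n [Hc [Hcn Hrt]]. split; [|split].
      - split; auto.
      - intros Hin. apply Hcn. apply (HSS _ Hin).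
      - destruct (Hv n) as [Hvf Hvs].
        assert (Hnot : ~ In (fst (r n)) (map fst S')) by (eapply rt_notin; eauto).
        eapply rt_trans.
        + apply (@lift1 V W H D S' _ d0 HSS Hd0 _ _ Hrt).
        + replace (r n) with (fst (r n), snd (r n)) at 2 by (destruct (r n); reflexivity).
          apply (@lift2 V W H D S' _ _ HSS Hvf Hnot).
          destruct (Hcon d0 (snd (r n)) Hd0 Hvs) as [_ [_ Hrt2]]. exact Hrt2. }
    exists (c, d0), k1, k2. split; intros n Hn; apply Hlift; auto.
    apply Hr2.
Qed.

Lemma cart_walk V W (X : graph V) (D : graph W) r :
  is_ray (cart X D) r ->
  forall n, adj X (fst (r n)) (fst (r (S n))) \/ fst (r n) = fst (r (S n)).
Proof.
  intros [_ [_ Ha]] n. destruct (Ha n) as [[A _]|[A _]]; auto.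
Qed.

Lemma cart_sub_ray V W (F G : graph V) (D : graph W) r :
  subgraph F G -> is_ray (cart F D) r -> is_ray (cart G D) r.
Proof.
  intros [HV HA] [Hi [Hv Ha]]. split; [auto|split].
  - intros n. destruct (Hv n). split; auto.
  - intros n. destruct (Ha n) as [[A [B C]]|[A [B C]]].
    + left. auto.
    + right. auto.
Qed.

Lemma tail_eq_refl V (H : graph V) a : tail_eq H a a.
Proof. intros S c; tauto. Qed.

Theorem lemma18 (V W : Type) (G F : graph V) (D : graph W) :
  wf_graph G -> infinite_graph G -> locally_finite G ->
  wf_graph F -> subgraph F G ->
  wf_graph D -> finite_graph D -> connected_graph D ->
  faithful F G -> faithful (cart F D) (cart G D).
Proof.
  intros _ _ _ _ Hsub HwD HfD HcD [Hf1 Hf2].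
  assert (Hpe : forall (X : graph V) (r : nat -> V * W), is_ray (cart X D) r -> exists p t,
     is_ray X p /\ (forall k, k <= t k /\ p k = fst (r (t k)))).
  { intros X r Hr. apply (@loop_erase V X (fun n => fst (r n))).
    - intros n. apply (proj1 (proj2 Hr) n).
    - exact (cart_walk Hr).
    - apply (avoid_one HfD Hr). }
  assert (Hte : forall (X : graph V) (r : nat -> V * W) (p : nat -> V) (t : nat -> nat), is_ray (cart X D) r ->
     (forall k, k <= t k /\ p k = fst (r (t k))) -> tail_eq X (fun n => fst (r n)) p).
  { intros X r p t Hr Ht. apply (@tail_sub V X (fun n => fst (r n)) p t).
    - exact (cart_walk Hr).
    - apply (avoid_list HfD Hr).
    - exact Ht. }
  split.
  - intros r Hr. destruct (Hpe G r Hr) as [p [t [Hp Ht]]].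
    destruct (Hf1 p Hp) as [q [Hq Heq]].
    set (d0 := snd (r 0)).
    assert (Hd0 : vert D d0) by apply (proj1 (proj2 Hr) 0).
    assert (Hr' : is_ray (cart F D) (fun n => (q n, d0))).
    { destruct Hq as [Hi [Hv Ha]]. split; [|split].
      - intros m n E. injection E. auto.
      - intros n. split; simpl; auto.
      - intros n. left. simpl. auto. }
    exists (fun n => (q n, d0)). split; [exact Hr'|].
    apply (proj2 (key HwD HfD HcD Hr (cart_sub_ray Hsub Hr'))).
    simpl.
    apply (proj2 (ray_equiv_tail (Hte G r p t Hr Ht) (tail_eq_refl G q))). exact Heq.
  - intros r1 r2 Hr1 Hr2.
    destruct (Hpe F r1 Hr1) as [p1 [t1 [Hp1 Ht1]]].
    destruct (Hpe F r2 Hr2) as [p2 [t2 [Hp2 Ht2]]].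
    pose proof (cart_sub_ray Hsub Hr1) as Gr1.
    pose proof (cart_sub_ray Hsub Hr2) as Gr2.
    rewrite (key HwD HfD HcD Hr1 Hr2).
    rewrite (key HwD HfD HcD Gr1 Gr2).
    rewrite (ray_equiv_tail (Hte F r1 p1 t1 Hr1 Ht1) (Hte F r2 p2 t2 Hr2 Ht2)).
    rewrite (ray_equiv_tail (Hte G r1 p1 t1 Gr1 Ht1) (Hte G r2 p2 t2 Gr2 Ht2)).
    apply Hf2; auto.
Qed.
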